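(* Let $\mathbf{X},\mathbf{Y}$ be computable metric spaces with $\mathbf{Y}$ compact, and $\mathfrak{A}\subseteq\mathcal{A}(\mathbf{X})$, $\mathfrak{B}\subseteq\mathcal{A}(\mathbf{Y})$. Let computable $H,K$ witness $\mathrm{C}_{\mathbf{X}|\mathfrak{A}}\leq_W\mathrm{C}_{\mathbf{Y}|\mathfrak{B}}$, in the sense that for every $\psi$-name $p$ of a set $A$ in the domain of $\mathrm{C}_{\mathbf{X}|\mathfrak{A}}$, $K(p)$ is a $\psi$-name of a set in the domain of $\mathrm{C}_{\mathbf{Y}|\mathfrak{B}}$, and for every name $q$ of a point of $\psi(K(p))$, $H(\langle p,q\rangle)$ is a name of a point of $A$. Then for every $p\in\operatorname{dom}(\mathrm{C}_{\mathbf{X}|\mathfrak{A}}\psi)$ and every $\varepsilon>0$ there are $n\in\mathbb{N}$ and $\delta>0$ such that for all $q\in X_\varepsilon(\mathfrak{A})\cap B(p,2^{-n})$ we have $\lambda(\psi(K(q)))>\delta$.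
   Context: For a computable metric space $\mathbf{X}$, $\mathcal{A}(\mathbf{X})$ is the space of closed subsets with representation $\psi(p):=X\setminus\bigcup_{i}B_{p(i)}$, where $(B_j)$ is a standard enumeration of open balls with centers in the dense subset and rational radii. $\mathrm{C}_{\mathbf{X}|\mathfrak{A}}$ is closed choice restricted to the non-empty members of $\mathfrak{A}$ (input a closed set, output any point of it); $\operatorname{dom}(\mathrm{C}_{\mathbf{X}|\mathfrak{A}}\psi)$ is the set of $\psi$-names of such sets. Points are named via the Cauchy representation. $B(p,2^{-n})$ is the ball in Baire space $\mathbb{N}^\mathbb{N}$ (standard metric), $B(x,\varepsilon)$ the open ball in $\mathbf{X}$, and $\lambda(A)$ the outer diameter $\sup\{d(x,y)\mid x,y\in A\}$. For $\varepsilon>0$, $X_\varepsilon(\mathfrak{A}) := \overline{\psi^{-1}(\{A\in\mathfrak{A}\mid \forall x\in\mathbf{X}\ \exists B\in\mathfrak{A}\ B\subseteq A\setminus B(x,\varepsilon)\})}\subseteq\mathbb{N}^\mathbb{N}$, where $A$ and $B$ range over non-empty members of $\mathfrak{A}$ and the closure is taken in Baire space. *)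

(* Defs.v *)
From Stdlib Require Import Reals Lra Lia List.
Open Scope R_scope.

Definition cpair (x y : nat) : nat := (((x + y) * (x + y + 1)) / 2 + y)%nat.

Fixpoint code_list (s : list nat) : nat :=
  match s with
  | nil => 0%nat
  | a :: s' => S (cpair a (code_list s'))
  end.

Definition prefix (p : nat -> nat) (k : nat) : list nat := map p (seq 0 k).

Inductive prf : Type :=
| PZero : prf
| PSucc : prf
| PProj : nat -> prf
| PComp : prf -> list prf -> prf
| PRec  : prf -> prf -> prf
| PMu   : prf -> prf.

Inductive prf_eval : prf -> list nat -> nat -> Prop :=
| ev_zero v : prf_eval PZero v 0
| ev_succ x v : prf_eval PSucc (x :: v) (S x)
| ev_proj i v : prf_eval (PProj i) v (nth i v 0%nat)
| ev_comp f gs v ys z :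
    Forall2 (fun g y => prf_eval g v y) gs ys ->
    prf_eval f ys z -> prf_eval (PComp f gs) v z
| ev_rec0 f g v z : prf_eval f v z -> prf_eval (PRec f g) (0%nat :: v) z
| ev_recS f g n v y z :
    prf_eval (PRec f g) (n :: v) y -> prf_eval g (n :: y :: v) z ->
    prf_eval (PRec f g) (S n :: v) z
| ev_mu f v n :
    prf_eval f (n :: v) 0 ->
    (forall m, (m < n)%nat -> exists k, prf_eval f (m :: v) (S k)) ->
    prf_eval (PMu f) v n.

Definition total_rec (e : prf) : Prop := forall x, exists y, prf_eval e (x :: nil) y.

(* A total recursive M is used as a machine: to compute the n-th output *)
(* entry on input p, M is run on <n, code(p|k)> for k = 0, 1, 2, ...;   *)
(* answer 0 means "read more input", answer m+1 means "output m".       *)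
(* Every computable partial function on Baire space is of this form.    *)

Definition machine_out (e : prf) (p : nat -> nat) (n m : nat) : Prop :=
  exists k,
    prf_eval e (cpair n (code_list (prefix p k)) :: nil) (S m) /\
    (forall k', (k' < k)%nat ->
       prf_eval e (cpair n (code_list (prefix p k')) :: nil) 0%nat).

Definition runs (e : prf) (p r : nat -> nat) : Prop :=
  forall n, machine_out e p n (r n).

Definition computable_machine (e : prf) : Prop := total_rec e.

Definition bpair (p q : nat -> nat) : nat -> nat :=
  fun i => if Nat.even i then p (Nat.div2 i) else q (Nat.div2 i).

(* Baire-space ball B(p, 2^-n) for the standard metric
   d(p,q) = 2^-(min {i | p i <> q i}) (d(p,p) = 0):
   d(p,q) < 2^-n  iff  p and q agree on 0..n. *)
Definition baire_ball (p : nat -> nat) (n : nat) (q : nat -> nat) : Prop :=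
  forall i, (i <= n)%nat -> p i = q i.

Definition baire_closure (S : (nat -> nat) -> Prop) (q : nat -> nat) : Prop :=
  forall n, exists r, S r /\ baire_ball q n r.

Definition zdec (a : nat) : R :=
  if Nat.even a then INR (Nat.div2 a) else - INR (S (Nat.div2 a)).

Definition qcode (m : nat) (t : R) : Prop :=
  exists a b, m = cpair a b /\ t = zdec a / INR (S b).

Record CMS : Type := {
  carrier :> Type;
  dist : carrier -> carrier -> R;
  dist_eq0 : forall x y, dist x y = 0 <-> x = y;
  dist_sym : forall x y, dist x y = dist y x;
  dist_tri : forall x y z, dist x z <= dist x y + dist y z;
  alpha : nat -> carrier;
  alpha_dense : forall x eps, 0 < eps -> exists i, dist (alpha i) x < eps;
  (* (i,j) |-> d(alpha i, alpha j) is computable: a total recursive f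
     yields rational 2^-n approximations. *)
  alpha_computable : exists f, total_rec f /\
    forall i j n m, prf_eval f (cpair (cpair i j) n :: nil) m ->
      exists t, qcode m t /\ Rabs (dist (alpha i) (alpha j) - t) <= / 2 ^ n
}.

Arguments dist {c} _ _.
Arguments alpha {c} _.

Section Spaces.
Variable X : CMS.

Definition ball (x : X) (eps : R) (y : X) : Prop := dist x y < eps.

Definition is_open (U : X -> Prop) : Prop :=
  forall x, U x -> exists r, 0 < r /\ forall y, dist x y < r -> U y.

Definition is_closed (A : X -> Prop) : Prop := is_open (fun x => ~ A x).

Definition compact_space : Prop :=
  forall (I : Type) (U : I -> X -> Prop),
    (forall i, is_open (U i)) -> (forall x, exists i, U i x) ->
    exists l : list I, forall x, exists i, In i l /\ U i x.

Definition Bj (j : nat) (x : X) : Prop :=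
  exists i a b, j = cpair i (cpair a b) /\
    dist (alpha i) x < INR (S a) / INR (S b).

Definition psi (p : nat -> nat) (x : X) : Prop := forall i, ~ Bj (p i) x.

Definition cauchy_name (q : nat -> nat) (x : X) : Prop :=
  forall n, dist (alpha (q n)) x <= / 2 ^ n.

Definition member (F : (X -> Prop) -> Prop) (S : X -> Prop) : Prop :=
  exists A, F A /\ forall x, A x <-> S x.

Definition nonempty (S : X -> Prop) : Prop := exists x, S x.

Definition dom_Cpsi (F : (X -> Prop) -> Prop) (p : nat -> nat) : Prop :=
  member F (psi p) /\ nonempty (psi p).

Definition Xeps (F : (X -> Prop) -> Prop) (eps : R) : (nat -> nat) -> Prop :=
  baire_closure (fun p =>
    member F (psi p) /\ nonempty (psi p) /\
    forall x : X, exists B, F B /\ nonempty B /\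
      forall y, B y -> psi p y /\ ~ ball x eps y).

(* lambda(A) > delta, with lambda(A) = sup {d(x,y) | x,y in A}. *)
Definition diam_gt (A : X -> Prop) (delta : R) : Prop :=
  exists x y, A x /\ A y /\ delta < dist x y.

End Spaces.

Arguments ball {X} _ _ _.
Arguments psi {X} _ _.
Arguments cauchy_name {X} _ _.
Arguments dom_Cpsi {X} _ _.
Arguments Xeps {X} _ _ _.
Arguments diam_gt {X} _ _.
Arguments member {X} _ _.

(* Main.v *)
Require Import Defs.
From Stdlib Require Import Reals Lra Lia List ClassicalEpsilon Classical.
Open Scope R_scope.

Section Ind.
Variable P : prf -> list nat -> nat -> Prop.
Hypothesis H0 : forall v, P PZero v 0.
Hypothesis HS : forall x v, P PSucc (x :: v) (S x).
Hypothesis HP : forall i v, P (PProj i) v (nth i v 0%nat).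
Hypothesis HC : forall f gs v ys z,
    Forall2 (fun g y => prf_eval g v y /\ P g v y) gs ys ->
    prf_eval f ys z -> P f ys z -> P (PComp f gs) v z.
Hypothesis HR0 : forall f g v z, prf_eval f v z -> P f v z -> P (PRec f g) (0%nat :: v) z.
Hypothesis HRS : forall f g n v y z,
    prf_eval (PRec f g) (n :: v) y -> P (PRec f g) (n :: v) y ->
    prf_eval g (n :: y :: v) z -> P g (n :: y :: v) z ->
    P (PRec f g) (S n :: v) z.
Hypothesis HM : forall f v n,
    prf_eval f (n :: v) 0 -> P f (n :: v) 0 ->
    (forall m, (m < n)%nat -> exists k, prf_eval f (m :: v) (S k) /\ P f (m :: v) (S k)) ->
    P (PMu f) v n.

Fixpoint pe_ind f v y (H : prf_eval f v y) {struct H} : P f v y :=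
  match H in prf_eval f v y return P f v y with
  | ev_zero v => H0 v
  | ev_succ x v => HS x v
  | ev_proj i v => HP i v
  | ev_comp f gs v ys z HF Hf =>
      HC f gs v ys z
        ((fix aux gs ys (HF : Forall2 (fun g y => prf_eval g v y) gs ys) :
             Forall2 (fun g y => prf_eval g v y /\ P g v y) gs ys :=
          match HF in Forall2 _ gs ys return Forall2 (fun g y => prf_eval g v y /\ P g v y) gs ys with
          | @Forall2_nil _ _ _ => @Forall2_nil _ _ _
          | @Forall2_cons _ _ _ g y gs ys Hg HF' =>
              @Forall2_cons _ _ _ g y gs ys (conj Hg (pe_ind g v y Hg)) (aux gs ys HF')
          end) gs ys HF) Hf (pe_ind f ys z Hf)
  | ev_rec0 f g v z Hf => HR0 f g v z Hf (pe_ind _ _ _ Hf)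
  | ev_recS f g n v y z H1 H2 => HRS f g n v y z H1 (pe_ind _ _ _ H1) H2 (pe_ind _ _ _ H2)
  | ev_mu f v n Hn Hm =>
      HM f v n Hn (pe_ind _ _ _ Hn)
        (fun m Hlt => match Hm m Hlt with
                      | ex_intro _ k Hk => ex_intro _ k (conj Hk (pe_ind _ _ _ Hk))
                      end)
  end.
End Ind.

Lemma prf_det : forall f v y, prf_eval f v y -> forall z, prf_eval f v z -> y = z.
Proof.
  apply (pe_ind (fun f v y => forall z, prf_eval f v z -> y = z)).
  - intros v z Hz; inversion Hz; auto.
  - intros x v z Hz; inversion Hz; auto.
  - intros i v z Hz; inversion Hz; auto.
  - intros f gs v ys z HF Hf IH z' Hz'. inversion Hz'; subst.
    match goal with H : Forall2 (fun g y => prf_eval g v y) gs ?l |- _ =>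
      rename l into ys0; rename H into HF0 end.
    match goal with H : prf_eval f ys0 z' |- _ => rename H into Hf0 end.
    apply IH. enough (ys = ys0) by (subst; auto).
    clear -HF HF0. revert ys0 HF0. induction HF; intros ys0 H2; inversion H2; subst; auto.
    destruct H as [_ H]. f_equal; auto.
  - intros f g v z Hf IH z' Hz'. inversion Hz'; subst; auto.
  - intros f g n v y z H1 IH1 H2 IH2 z' Hz'. inversion Hz'; subst.
    match goal with H : prf_eval (PRec f g) (n :: v) ?y' |- _ => apply IH1 in H; subst y' end.
    auto.
  - intros f v n Hn IHn Hm z Hz. inversion Hz; subst.
    match goal with H : forall m, (m < z)%nat -> _ |- _ => rename H into H3 end.
    match goal with H : prf_eval f (z :: v) 0 |- _ => rename H into H1 end.
    destruct (Nat.lt_trichotomy n z) as [Hlt|[Heq|Hlt]]; auto.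
    + destruct (H3 n Hlt) as [k Hk]. apply IHn in Hk. discriminate.
    + destruct (Hm z Hlt) as [k [Hk IH]]. apply IH in H1. discriminate.
Qed.

Lemma prefix_eq u v k : (forall i, (i < k)%nat -> u i = v i) -> prefix u k = prefix v k.
Proof.
  intros H. unfold prefix. apply map_ext_in. intros a Ha. apply in_seq in Ha. apply H; lia.
Qed.

Lemma mo_cont e u n m :
  machine_out e u n m -> exists k, forall v m', (forall i, (i < k)%nat -> u i = v i) ->
  machine_out e v n m' -> m = m'.
Proof.
  intros [k [Hk Hlt]]. exists k. intros v m' Hag [k2 [Hk2 Hlt2]].
  destruct (Nat.lt_trichotomy k2 k) as [Hc|[Hc|Hc]].
  - rewrite <- (prefix_eq u v k2) in Hk2 by (intros; apply Hag; lia).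
    specialize (Hlt k2 Hc). pose proof (prf_det _ _ _ Hlt _ Hk2). discriminate.
  - subst k2. rewrite <- (prefix_eq u v k) in Hk2 by (intros; apply Hag; lia).
    pose proof (prf_det _ _ _ Hk _ Hk2). congruence.
  - specialize (Hlt2 k Hc). rewrite <- (prefix_eq u v k) in Hlt2 by (intros; apply Hag; lia).
    pose proof (prf_det _ _ _ Hk _ Hlt2). discriminate.
Qed.

Lemma dist_refl (X : CMS) (x : X) : Defs.dist x x = 0.
Proof. apply dist_eq0. reflexivity. Qed.

Lemma dist_nonneg (X : CMS) (x y : X) : 0 <= Defs.dist x y.
Proof. pose proof (Defs.dist_tri X x y x). rewrite dist_refl in H. rewrite (Defs.dist_sym X y x) in H. lra. Qed.

Lemma Bj_open (X : CMS) j : is_open X (Bj X j).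
Proof.
  intros x [i [a [b [Hj Hd]]]]. exists (INR (S a) / INR (S b) - Defs.dist (alpha i) x). split; [lra|].
  intros y Hy. exists i, a, b. split; auto. pose proof (Defs.dist_tri X (alpha i) x y). lra.
Qed.

Definition Tn (s : nat) : nat := (s * (s + 1) / 2)%nat.

Lemma Tn_S s : Tn (S s) = (Tn s + S s)%nat.
Proof.
  unfold Tn. replace (S s * (S s + 1))%nat with (s * (s + 1) + (S s) * 2)%nat by lia.
  rewrite Nat.div_add; lia.
Qed.

Lemma Tn_mono s s' : (s < s')%nat -> (Tn s + s < Tn s')%nat.
Proof.
  induction 1. rewrite Tn_S; lia. rewrite Tn_S; lia.
Qed.

Lemma cpair_T x y : cpair x y = (Tn (x + y) + y)%nat.
Proof. unfold cpair, Tn. reflexivity. Qed.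

Lemma cpair_inj x y x' y' : cpair x y = cpair x' y' -> x = x' /\ y = y'.
Proof.
  rewrite !cpair_T. intros H.
  destruct (Nat.lt_trichotomy (x + y) (x' + y')) as [Hc|[Hc|Hc]].
  - pose proof (Tn_mono _ _ Hc). lia.
  - rewrite Hc in H. lia.
  - pose proof (Tn_mono _ _ Hc). lia.
Qed.

Lemma INR_le_pow2 n : INR n + 1 <= 2 ^ n.
Proof.
  induction n. simpl; lra. rewrite S_INR. simpl. pose proof (pos_INR n). lra.
Qed.

Lemma pow2_pos n : 0 < 2 ^ n.
Proof. apply pow_lt. lra. Qed.

Lemma exists_pow2 eps : 0 < eps -> exists n, / 2 ^ n < eps.
Proof.
  intros He. destruct (archimed_cor1 eps He) as [N [HN HN0]]. exists N.
  apply Rle_lt_trans with (/ INR N); auto.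
  apply Rinv_le_contravar. apply lt_0_INR; auto. pose proof (INR_le_pow2 N). lra.
Qed.

Lemma pow2_le_mono m n : (m <= n)%nat -> / 2 ^ n <= / 2 ^ m.
Proof.
  intros H. apply Rinv_le_contravar. apply pow2_pos. apply Rle_pow; auto; lra.
Qed.

Lemma choice_nat (P : nat -> nat -> Prop) : (forall n, exists m, P n m) -> exists f, forall n, P n (f n).
Proof.
  intros H. exists (fun n => proj1_sig (constructive_indefinite_description _ (H n))).
  intros n. exact (proj2_sig (constructive_indefinite_description _ (H n))).
Qed.

Lemma slack_name (X : CMS) (y : X) : exists t : nat -> nat, forall i, Defs.dist (alpha (t i)) y < / 2 ^ i / 2.
Proof.
  apply (choice_nat (fun i m => Defs.dist (alpha m) y < / 2 ^ i / 2)). intros i. apply alpha_dense. pose proof (pow2_pos i).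
  apply Rdiv_lt_0_compat; [apply Rinv_0_lt_compat; auto|lra].
Qed.

Lemma code_ball (X : CMS) (B : X -> Prop) z : is_closed X B -> ~ B z ->
  exists j, Bj X j z /\ forall w, Bj X j w -> ~ B w.
Proof.
  intros HB Hz. destruct (HB z Hz) as [rho [Hr Hball]].
  destruct (archimed_cor1 (rho / 2)) as [c [Hc Hc0]]; [lra|].
  destruct c as [|c]; [lia|].
  assert (Hc1 : 0 < / INR (S c)) by (apply Rinv_0_lt_compat, lt_0_INR; lia).
  destruct (alpha_dense X z (/ INR (S c)) Hc1) as [i Hi].
  exists (cpair i (cpair 0 c)). split.
  - exists i, 0%nat, c. split; auto. change (INR 1) with 1. lra.
  - intros w [i' [a' [c' [Hj Hd]]]]. apply cpair_inj in Hj as [<- Hj].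
    apply cpair_inj in Hj as [<- <-]. change (INR 1) with 1 in Hd.
    apply Hball. pose proof (Defs.dist_tri X z (alpha i) w). rewrite (Defs.dist_sym X z (alpha i)) in H. unfold Rdiv in Hd. lra.
Qed.

Lemma name_ext (X : CMS) (q : nat -> nat) N (B : X -> Prop) :
  is_closed X B -> (forall z, B z -> psi q z) ->
  exists b, baire_ball q N b /\ forall z, psi b z <-> B z.
Proof.
  intros HB Hsub.
  set (S := fun j => forall w, Bj X j w -> ~ B w).
  exists (fun i => if Nat.leb i N then q i else
            if excluded_middle_informative (S (i - Datatypes.S N)%nat) then (i - Datatypes.S N)%nat else q 0%nat).
  split.
  - intros i Hi. apply Nat.leb_le in Hi. rewrite Hi. auto.
  - intros z. split.
    + intros Hz. apply NNPP. intros Hnb. destruct (code_ball X B z HB Hnb) as [j [Hj HS]].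
      apply (Hz (j + Datatypes.S N)%nat). 
      destruct (Nat.leb (j + Datatypes.S N) N) eqn:E; [apply Nat.leb_le in E; lia|].
      replace (j + Datatypes.S N - Datatypes.S N)%nat with j by lia.
      destruct (excluded_middle_informative (S j)); [auto|contradiction].
    + intros Hz i. destruct (Nat.leb i N).
      * apply Hsub; auto.
      * destruct (excluded_middle_informative _) as [Hs|_].
        -- intros Hb. exact (Hs z Hb Hz).
        -- apply Hsub; auto.
Qed.
Lemma list_bound (A : Type) (Q : A -> nat -> Prop)
  (Hmono : forall a N N', (N <= N')%nat -> Q a N -> Q a N') (l : list A) :
  (forall a, In a l -> exists N, Q a N) -> exists N, forall a, In a l -> Q a N.
Proof.
  induction l as [|a l IH]; intros H.
  - exists 0%nat. intros a [].
  - destruct (H a (or_introl eq_refl)) as [N1 HN1].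
    destruct IH as [N2 HN2]. { intros b Hb. apply H. right; auto. }
    exists (Nat.max N1 N2). intros b [<-|Hb].
    + apply Hmono with N1; auto; lia.
    + apply Hmono with N2; auto; lia.
Qed.

Lemma bb_weaken u v m n : baire_ball u m v -> (n <= m)%nat -> baire_ball u n v.
Proof. intros H Hnm i Hi. apply H. lia. Qed.

Lemma bb_trans u v w n : baire_ball u n v -> baire_ball v n w -> baire_ball u n w.
Proof. intros H1 H2 i Hi. rewrite H1, H2; auto. Qed.

Lemma run_cont e u i m : machine_out e u i m ->
  exists N, forall b rb, baire_ball u N b -> runs e b rb -> rb i = m.
Proof.
  intros H. destruct (mo_cont e u i m H) as [k Hk].
  exists k. intros b rb Hb Hrb. symmetry. apply (Hk b); auto.
  intros j Hj. apply Hb. lia.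
Qed.

Theorem lemma19 (X Y : CMS) (HY : compact_space Y)
  (FA : (X -> Prop) -> Prop) (FB : (Y -> Prop) -> Prop)
  (HFA : forall A, FA A -> is_closed X A)
  (HFB : forall B, FB B -> is_closed Y B)
  (eH eK : prf) (Hcomp : computable_machine eH) (Kcomp : computable_machine eK)
  (HK : forall p, dom_Cpsi FA p ->
     exists r, runs eK p r /\ dom_Cpsi FB r /\
       forall (q : nat -> nat) (y : Y), psi r y -> cauchy_name q y ->
         exists s, runs eH (bpair p q) s /\
           exists x : X, cauchy_name s x /\ psi p x) :
  forall p, dom_Cpsi FA p -> forall eps, 0 < eps ->
    exists (n : nat) (delta : R), 0 < delta /\
      forall q, Xeps FA eps q -> baire_ball p n q ->
        forall r, runs eK q r -> diam_gt (@psi Y r) delta.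
Proof.
  intros p Hp eps Heps.
  destruct (HK p Hp) as [r0 [Hr0 [Hdom0 Hh0]]].
  destruct (exists_pow2 (eps / 2)) as [j0 Hj0]; [lra|].
  set (Pg := fun (y : Y) (L : nat) => psi r0 y /\ exists (t s : nat -> nat) (x : X),
     (forall i, Defs.dist (alpha (t i)) y < / 2 ^ i / 2) /\ cauchy_name s x /\ psi p x /\
     (forall b t' s', baire_ball p L b -> baire_ball t L t' -> runs eH (bpair b t') s' -> s' j0 = s j0)).
  assert (HPg : forall y, psi r0 y -> exists L, Pg y L).
  { intros y Hy. destruct (slack_name Y y) as [t Ht].
    assert (Hn : cauchy_name t y).
    { intros i. specialize (Ht i). pose proof (pow2_pos i).
      assert (0 < / 2 ^ i) by (apply Rinv_0_lt_compat; auto). lra. }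
    destruct (Hh0 t y Hy Hn) as [s [Hrun [x [Hs Hx]]]].
    destruct (run_cont eH (bpair p t) j0 (s j0) (Hrun j0)) as [N HN].
    exists N. split; auto. exists t, s, x. repeat split; auto.
    intros b t' s' Hb Ht' Hs'. apply (HN (bpair b t')); auto.
    intros i Hi. unfold bpair. pose proof (Nat.le_div2_diag_l i).
    destruct (Nat.even i); [apply Hb|apply Ht']; lia. }
  set (U1 := fun (a : ((Y * nat) + nat)%type) (z : Y) =>
    match a with inl (y, L) => Pg y L /\ Defs.dist y z < / 2 ^ L / 4
               | inr i => Bj Y (r0 i) z end).
  assert (HU1o : forall a, is_open Y (U1 a)).
  { intros [[y L]|i]; simpl.
    - intros z [HP Hd]. exists (/ 2 ^ L / 4 - Defs.dist y z). split; [lra|].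
      intros w Hw. split; auto. pose proof (Defs.dist_tri Y y z w). lra.
    - apply Bj_open. }
  assert (HU1c : forall z, exists a, U1 a z).
  { intros z. destruct (classic (psi r0 z)) as [Hz|Hz].
    - destruct (HPg z Hz) as [L HL]. exists (inl (z, L)). simpl. split; auto.
      rewrite dist_refl. pose proof (pow2_pos L).
      assert (0 < / 2 ^ L) by (apply Rinv_0_lt_compat; auto). lra.
    - apply not_all_not_ex in Hz as [i Hi]. exists (inr i). simpl. auto. }
  destruct (HY _ U1 HU1o HU1c) as [l1 Hl1].
  destruct (list_bound _ (fun (a : ((Y * nat) + nat)%type) N => match a with inl (y, L) => (L <= N)%nat
       | inr i => forall b rb, baire_ball p N b -> runs eK b rb -> rb i = r0 i end) ) with (l := l1)
    as [N1 HN1].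
  { intros [[y L]|i] N N' HNN' H; [lia|]. intros b rb Hb. apply H. eapply bb_weaken; eauto. }
  { intros [[y L]|i] _; [exists L; auto|]. apply run_cont; auto. }
  set (delta := / 2 ^ N1 / 20).
  assert (Hd0 : 0 < delta).
  { unfold delta. pose proof (pow2_pos N1).
    assert (0 < / 2 ^ N1) by (apply Rinv_0_lt_compat; auto). lra. }
  exists N1, delta. split; auto.
  intros q Hq Hpq r Hr.
  apply NNPP. intros Hnd.
  assert (Hsmall : forall a c : Y, psi r a -> psi r c -> Defs.dist a c <= delta).
  { intros a c Ha Hc. apply Rnot_lt_le. intros Hlt. apply Hnd. exists a, c. auto. }
  set (U2 := fun (a : option nat) (y : Y) => match a with
     | None => exists z, psi r z /\ Defs.dist z y < 2 * delta
     | Some i => Bj Y (r i) y end).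
  assert (HU2o : forall a, is_open Y (U2 a)).
  { intros [i|]; simpl.
    - apply Bj_open.
    - intros y [z [Hz Hzy]]. exists (2 * delta - Defs.dist z y). split; [lra|].
      intros w Hw. exists z. split; auto. pose proof (Defs.dist_tri Y z y w). lra. }
  assert (HU2c : forall y, exists a, U2 a y).
  { intros y. destruct (classic (psi r y)) as [Hy|Hy].
    - exists None. simpl. exists y. split; auto. rewrite dist_refl. lra.
    - apply not_all_not_ex in Hy as [i Hi]. exists (Some i). simpl. auto. }
  destruct (HY _ U2 HU2o HU2c) as [l2 Hl2].
  destruct (list_bound _ (fun (a : option nat) N => match a with None => True
       | Some i => forall b rb, baire_ball q N b -> runs eK b rb -> rb i = r i end) ) with (l := l2)
    as [N2 HN2].
  { intros [i|] N N' HNN' H; [|auto]. intros b rb Hb. apply H. eapply bb_weaken; eauto. }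
  { intros [i|] _; [|exists 0%nat; auto]. apply run_cont; auto. }
  set (N3 := Nat.max N1 N2).
  assert (Key : forall v rv, baire_ball q N3 v -> runs eK v rv -> forall y, psi rv y ->
     (exists z, psi r z /\ Defs.dist z y < 2 * delta) /\
     exists y0 L, Pg y0 L /\ Defs.dist y0 y < / 2 ^ L / 4 /\ (L <= N1)%nat).
  { intros v rv Hv Hrv y Hy. split.
    - destruct (Hl2 y) as [a [Ha HU]]. destruct a as [i|]; simpl in HU; auto.
      exfalso. specialize (HN2 _ Ha). simpl in HN2.
      rewrite <- (HN2 v rv) in HU; auto. exact (Hy i HU).
      eapply bb_weaken; eauto. unfold N3; lia.
    - destruct (Hl1 y) as [a [Ha HU]]. specialize (HN1 _ Ha).
      assert (Hpv : baire_ball p N1 v).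
      { eapply bb_trans; eauto. eapply bb_weaken; eauto. unfold N3; lia. }
      destruct a as [[y0 L]|i]; simpl in HU, HN1.
      + exists y0, L. destruct HU; auto.
      + exfalso. rewrite <- (HN1 v rv) in HU; auto. exact (Hy i HU). }
  destruct (Hq N3) as [q' [[Hmem [Hne Hprop]] Hqq']].
  destruct (HK q' (conj Hmem Hne)) as [r' [Hr' [[_ [w Hw]] _]]].
  destruct (Key q' r' Hqq' Hr' w Hw) as [[z1 [Hz1 Hz1w]] [y0 [L [HPL [Hy0w HL]]]]].
  destruct HPL as [_ [t [s [x [Ht [Hs [Hx Hcont]]]]]]].
  destruct (Hprop x) as [B [HBF [HneB HBsub]]].
  destruct (name_ext X q' N3 B (HFA B HBF) (fun z Hz => proj1 (HBsub z Hz))) as [b [Hbq' Hbpsi]].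
  assert (Hdb : dom_Cpsi FA b).
  { split.
    - exists B. split; auto. intros z. rewrite Hbpsi. tauto.
    - destruct HneB as [z Hz]. exists z. apply Hbpsi. auto. }
  destruct (HK b Hdb) as [rb [Hrb [[_ [y' Hy']] Hhb]]].
  assert (Hqb : baire_ball q N3 b) by (eapply bb_trans; eauto).
  destruct (Key b rb Hqb Hrb y' Hy') as [[z2 [Hz2 Hz2y]] _].
  assert (HLpow : / 2 ^ N1 <= / 2 ^ L) by (apply pow2_le_mono; auto).
  assert (Hyy : Defs.dist y0 y' < / 2 ^ L / 2).
  { pose proof (Defs.dist_tri Y y0 w y'). pose proof (Defs.dist_tri Y w z1 y').
    pose proof (Defs.dist_tri Y z1 z2 y'). pose proof (Hsmall z1 z2 Hz1 Hz2).
    rewrite (Defs.dist_sym Y w z1) in *. unfold delta in *. set (aN := / 2 ^ N1) in *. set (aL := / 2 ^ L) in *. assert (Defs.dist y0 y' <= Defs.dist y0 w + Defs.dist z1 w + Defs.dist z1 z2 + Defs.dist z2 y') by lra. assert (Defs.dist z1 w + Defs.dist z1 z2 + Defs.dist z2 y' < aN/4) by lra. lra. }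
  destruct (slack_name Y y') as [t'' Ht''].
  set (t' := fun i => if Nat.leb i L then t i else t'' i).
  assert (Hn' : cauchy_name t' y').
  { intros i. unfold t'. pose proof (pow2_pos i).
    assert (0 < / 2 ^ i) by (apply Rinv_0_lt_compat; auto).
    destruct (Nat.leb i L) eqn:E.
    - apply Nat.leb_le in E. pose proof (pow2_le_mono _ _ E).
      pose proof (Defs.dist_tri Y (alpha (t i)) y0 y'). specialize (Ht i). lra.
    - specialize (Ht'' i). lra. }
  destruct (Hhb t' y' Hy' Hn') as [s' [Hrun' [x'' [Hs' Hx'']]]].
  apply Hbpsi in Hx''. destruct (HBsub x'' Hx'') as [_ Hfar].
  assert (Hpb : baire_ball p L b).
  { eapply bb_weaken with (m := N1); auto. eapply bb_trans; eauto.
    eapply bb_weaken; eauto. unfold N3; lia. }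
  assert (Htt : baire_ball t L t').
  { intros i Hi. unfold t'. apply Nat.leb_le in Hi. rewrite Hi. auto. }
  pose proof (Hcont b t' s' Hpb Htt Hrun') as Heq.
  apply Hfar. unfold ball.
  pose proof (Defs.dist_tri X x (alpha (s j0)) x''). specialize (Hs j0). specialize (Hs' j0).
  rewrite Heq in Hs'. rewrite (Defs.dist_sym X x (alpha (s j0))) in H. lra.
Qed.
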